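(* Given a connected conjunctive query $q$ and $\varepsilon<1-1/\tau^*(q)$, there exists an algorithm that runs in one round in $\mathrm{MPC}(\varepsilon)$ and reports $\Theta\!\left(\mathbf E[|q(I)|]/p^{\tau^*(q)(1-\varepsilon)-1}\right)$ correct answers in expectation on matching databases.
   Context: Conjunctive queries $q(x_1,\ldots,x_k)=S_1(\bar x_1),\ldots,S_\ell(\bar x_\ell)$ are full and self-join-free; connected means the hypergraph (variables as vertices, hyperedge $\mathrm{vars}(S_j)$ per atom) is connected. $\tau^*(q)=\min\sum_iv_i$ over $v_i\ge0$ with $\sum_{i:x_i\in\mathrm{vars}(S_j)}v_i\ge1$ for all $j$. A matching database over $[n]$: each $S_j$ has exactly $n$ tuples and each column contains each value of $[n]$ exactly once; $\mathbf E[|q(I)|]$ is over a uniformly random matching database. $\mathrm{MPC}(\varepsilon)$: $p$ servers of unlimited power, private channels, rounds of computation and communication, each server receiving $O(N/p^{1-\varepsilon})$ bits ($O(n/p^{1-\varepsilon})$ tuples) per round, shared randomness. *)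

(* Defs.v *)
From HB Require Import structures.
From Stdlib Require Import Relations.
From mathcomp Require Import all_boot all_order all_algebra.
From mathcomp Require Import all_classical all_reals all_analysis.
Unset Implicit Arguments. Unset Printing Implicit Defensive.
Import Order.TTheory GRing.Theory Num.Theory.
Local Open Scope ring_scope.

(* A full, self-join-free conjunctive query q(x_0..x_{k-1}) = S_0(..),...,S_{l-1}(..):
   atom j has arity cq_ar j and its c-th column holds variable cq_var j c.
   Distinct atoms are distinct relation symbols (self-join-free); every
   variable is in the head (full). *)
Record cq := CQ {
  cq_k : nat;
  cq_l : nat;
  cq_ar : 'I_cq_l -> nat;
  cq_var : forall j : 'I_cq_l, 'I_(cq_ar j) -> 'I_cq_k }.

Definition cq_wf (q : cq) : Prop :=
  (0 < cq_l q)%N /\ (forall j, 0 < cq_ar q j)%N /\ (forall j, injective (cq_var q j)).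

Definition occurs (q : cq) (x : 'I_(cq_k q)) (j : 'I_(cq_l q)) : Prop :=
  exists c, cq_var q j c = x.

Definition adjacent (q : cq) (x y : 'I_(cq_k q)) : Prop :=
  exists j, occurs q x j /\ occurs q y j.

Definition cq_connected (q : cq) : Prop :=
  (forall x : 'I_(cq_k q), exists j, occurs q x j) /\
  (forall x y, clos_refl_trans _ (adjacent q) x y).

Definition frac_cover (R : realType) (q : cq) (v : 'I_(cq_k q) -> R) : Prop :=
  (forall i, 0 <= v i) /\
  (forall j : 'I_(cq_l q), 1 <= \sum_(i | [exists c, cq_var q j c == i]) v i).

Definition is_tau_star (R : realType) (q : cq) (t : R) : Prop :=
  (exists v : 'I_(cq_k q) -> R, frac_cover R q v /\ \sum_i v i = t) /\
  (forall v : 'I_(cq_k q) -> R, frac_cover R q v -> t <= \sum_i v i).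

Definition tup (q : cq) (n : nat) (j : 'I_(cq_l q)) := {ffun 'I_(cq_ar q j) -> 'I_n}.
Definition db (q : cq) (n : nat) := {dffun forall j : 'I_(cq_l q), {set tup q n j}}.

Definition matching_rel (n a : nat) (S : {set {ffun 'I_a -> 'I_n}}) : bool :=
  (#|S| == n) && [forall c : 'I_a, forall v : 'I_n, #|[set t in S | t c == v]| == 1%N].

Definition matching_dbs (q : cq) (n : nat) : {set db q n} :=
  [set I : db q n | [forall j, matching_rel n (cq_ar q j) (I j)]].

Definition answers (q : cq) (n : nat) (I : db q n) : {set {ffun 'I_(cq_k q) -> 'I_n}} :=
  [set x : {ffun 'I_(cq_k q) -> 'I_n} |
     [forall j, [ffun c => x (cq_var q j c)] \in I j]].

(* One-round MPC algorithm with p servers and shared randomness: the input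
   server holding S_j sends to each worker s a set of tuples of S_j chosen
   as a function of S_j, of the shared random seed w and of s; each worker
   then reports all answers derivable from what it received (these are
   always correct answers). *)
Record one_round_alg (q : cq) (n p : nat) := OneRound {
  seed : finType;
  seed0 : seed;
  route : forall j : 'I_(cq_l q), {set tup q n j} -> seed -> 'I_p -> {set tup q n j};
  route_sub : forall j S w s, route j S w s \subset S }.

Definition received (q : cq) (n p : nat) (A : one_round_alg q n p)
  (I : db q n) (w : seed q n p A) (s : 'I_p) : db q n :=
  [ffun j => route q n p A j (I j) w s].

Definition reported (q : cq) (n p : nat) (A : one_round_alg q n p)
  (I : db q n) (w : seed q n p A) : nat :=
  #|\bigcup_(s < p) answers q n (received q n p A I w s)|.

Definition load_ok (R : realType) (q : cq) (n p : nat) (A : one_round_alg q n p)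
  (eps C : R) : Prop :=
  forall I, I \in matching_dbs q n -> forall (w : seed q n p A) (s : 'I_p),
    ((\sum_j #|route q n p A j (I j) w s|)%N)%:R <= C * n%:R / (p%:R `^ (1 - eps)).

Definition expected_reported (R : realType) (q : cq) (n p : nat)
  (A : one_round_alg q n p) : R :=
  (\sum_(I in matching_dbs q n) \sum_(w : seed q n p A) (reported q n p A I w)%:R)
  / (#|matching_dbs q n|%:R * #|seed q n p A|%:R).

Definition expected_output (R : realType) (q : cq) (n : nat) : R :=
  (\sum_(I in matching_dbs q n) #|answers q n I|%:R) / #|matching_dbs q n|%:R.

(* Main.v *)
Require Import Defs.
From HB Require Import structures.
From mathcomp Require Import all_boot all_order all_algebra.
From mathcomp Require Import all_classical all_reals all_analysis.
From mathcomp Require Import ring lra zify.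
Import Order.TTheory GRing.Theory Num.Theory.
Import ssrbool eqtype ssrnat seq fintype finfun finset bigop.
Notation inE := finset.inE (only parsing).
Notation set0 := finset.set0 (only parsing).
Notation setP := finset.setP (only parsing).
Notation bigcupP := finset.bigcupP (only parsing).
Notation subsetP := fintype.subsetP (only parsing).
Set Implicit Arguments. Unset Strict Implicit. Unset Printing Implicit Defensive.
Lemma fpr (T:eqType) (f : T -> nat) s : foldr muln 1 (map f s) = \prod_(x <- s) f x.
Proof. by elim: s => [|a s IH]; rewrite ?big_nil ?big_cons //= IH. Qed.
Lemma fp (T:finType) (f : T -> nat) : foldr muln 1 [seq f x | x : T] = \prod_(x : T) f x.
Proof. by rewrite fpr -big_enum /=. Qed.
Section Count.
Variables (k n : nat) (Pf : 'I_k -> nat).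
Definition Hty := {dffun forall i : 'I_k, {ffun 'I_n -> 'I_(Pf i)}}.
Definition Kty := {dffun forall i : 'I_k, 'I_(Pf i)}.

Lemma card_H : #|{: Hty}| = \prod_i Pf i ^ n.
Proof. rewrite card_dep_ffun fp; apply: eq_bigr => i _; by rewrite card_ffun !card_ord. Qed.

Lemma card_K : #|{: Kty}| = \prod_i Pf i.
Proof. rewrite card_dep_ffun fp; apply: eq_bigr => i _; by rewrite card_ord. Qed.

Lemma count1 (P : nat) (Z : {set 'I_n}) (c : 'I_P) :
  #|[pred f : {ffun 'I_n -> 'I_P} | [forall a in Z, f a == c]]| * P ^ #|Z| = P ^ n.
Proof.
have -> : #|[pred f : {ffun 'I_n -> 'I_P} | [forall a in Z, f a == c]]| =
  #|(family (fun a : 'I_n => if a \in Z then pred1 c else predT) : simpl_pred {ffun 'I_n -> 'I_P})|.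
  apply: eq_card => f; rewrite !inE; apply/forall_inP/familyP => H a.
    by case: ifP => aZ //; rewrite inE H.
  by move=> aZ; have := H a; rewrite aZ.
rewrite card_family fp.
rewrite (bigID (fun a => a \in Z)) /=.
rewrite (eq_bigr (fun _ => 1)); last by move=> a ->; rewrite card1.
rewrite (eq_bigr (fun _ => P) (P := fun a => a \notin Z)); last first.
  by move=> a /negbTE ->; rewrite cardT size_enum_ord.
rewrite big1 // mul1n !prod_nat_const -expnD; congr (_ ^ _).
rewrite addnC; transitivity #|'I_n|; last exact: card_ord.
rewrite -(cardC Z); congr (_ + _); apply: eq_card => a; by rewrite !inE.
Qed.

Lemma countZ (Z : 'I_k -> {set 'I_n}) (c : Kty) :
  #|[set h : Hty | [forall i, [forall a in Z i, h i a == c i]]]| * \prod_i Pf i ^ #|Z i| = #|{: Hty}|.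
Proof.
have -> : #|[set h : Hty | [forall i, [forall a in Z i, h i a == c i]]]| =
  #|(family (fun i => [pred f : {ffun 'I_n -> 'I_(Pf i)} | [forall a in Z i, f a == c i]]) : simpl_pred Hty)|.
  apply: eq_card => h; rewrite !inE; apply/forallP/familyP => H i; by have := H i.
rewrite card_family fp card_H -big_split /=; apply: eq_bigr => i _; exact: count1.
Qed.
End Count.
Lemma card_preim (T U : finType) (f : T -> U) (C : {set U}) (P : pred T) :
  #|[set h | (f h \in C) && P h]| = \sum_(c in C) #|[set h | (f h == c) && P h]|.
Proof.
rewrite -sum1_card (partition_big f (mem C)) /=; last by move=> h; rewrite inE => /andP[].
apply: eq_bigr => c cC; rewrite -sum1_card; apply: eq_bigl => h; rewrite !inE.
by case: eqP => [->|]; rewrite ?cC ?andbF // andbC.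
Qed.

Lemma cardEsum (T : finType) (A : {set T}) : #|A| = \sum_h (h \in A : nat).
Proof. by rewrite -sum1_card big_mkcond; apply: eq_bigr => h _; case: (h \in A). Qed.

Lemma markov (R : realType) (T : finType) (D : pred T) (f : T -> nat) (L : R) : (0 <= L)%R ->
  (#|[set h | D h && (L < (f h)%:R)%R]|%:R * L <= (\sum_(h | D h) f h)%:R)%R.
Proof.
move=> L0; rewrite -sum1_card natr_sum mulr_suml natr_sum.
rewrite [X in (_ <= X)%R](bigID (fun h => (L < (f h)%:R)%R)) /=.
rewrite -[X in (X <= _)%R]addr0; apply: lerD; last by apply: sumr_ge0 => h _; rewrite ler0n.
rewrite (eq_bigl (fun h => D h && (L < (f h)%:R)%R)); last by move=> h; rewrite inE.
by apply: ler_sum => h /andP[_ /ltW]; rewrite mul1r.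
Qed.

Section Alg.
Variables (q : cq) (n p : nat) (P0 : 'I_(cq_k q) -> nat) (R : realType) (Lr : R).
Definition Pf i := (P0 i).+1.
Definition H := Hty n Pf.
Definition K := Kty Pf.
Definition c0 : K := finfun (fun i => (ord0 : 'I_(Pf i))).
Definition h0 : H := finfun (fun i => [ffun _ : 'I_n => (ord0 : 'I_(Pf i))]).
Definition cell (s : 'I_p) : K := nth c0 (enum {: K}) s.
Definition hx (h : H) (x : {ffun 'I_(cq_k q) -> 'I_n}) : K := finfun (fun i => h i (x i)).
Definition Tset j (S : {set tup q n j}) (h : H) (c : K) : {set tup q n j} :=
  [set t in S | [forall col, h (cq_var q j col) (t col) == c (cq_var q j col)]].
Definition rt j (S : {set tup q n j}) (h : H) (s : 'I_p) : {set tup q n j} :=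
  if (#|Tset S h (cell s)|%:R <= Lr)%R then Tset S h (cell s) else finset.set0.
Lemma rt_sub j S h s : rt (j:=j) S h s \subset S.
Proof. rewrite /rt; case: ifP => _; last exact: finset.sub0set.
by apply/subsetP => t; rewrite inE => /andP[]. Qed.
Definition Alg : one_round_alg q n p := @OneRound q n p H h0 rt rt_sub.

Lemma hx_eqE h x c : (hx h x == c) = [forall i, h i (x i) == c i].
Proof.
apply/eqP/forallP => [<- i|E]; first by rewrite /hx ffunE.
by apply/ffunP => i; rewrite /hx ffunE; apply/eqP.
Qed.

Lemma count_hx x c : #|[set h : H | hx h x == c]| * #|{: K}| = #|{: H}|.
Proof.
have := @countZ (cq_k q) n Pf (fun i => [set x i]) c.
rewrite card_K; under eq_bigr => i _ do rewrite cards1 expn1.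
move=> <-; congr (_ * _); apply: eq_card => h; rewrite !inE hx_eqE.
apply/forallP/forallP => E i; have := E i.
  by move=> /eqP E'; apply/forall_inP => a; rewrite inE => /eqP ->; apply/eqP.
by move/forall_inP => E'; exact: (E' (x i) (set11 _)).
Qed.

Definition CS := [set cell s | s : 'I_p].
Lemma card_CS : p <= #|{: K}| -> #|CS| = p.
Proof.
move=> hp; rewrite card_imset ?card_ord // => s s' /eqP.
rewrite /cell nth_uniq ?enum_uniq ?size_enum_ord -?cardE //; last first.
- exact: leq_trans (ltn_ord s') hp.
- exact: leq_trans (ltn_ord s) hp.
by move/eqP; apply: val_inj.
Qed.

Lemma mem_answers (D : db q n) x :
  (x \in answers q n D) = [forall j, [ffun c => x (cq_var q j c)] \in D j].
Proof. by rewrite inE. Qed.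

Lemma received_E (I : db q n) h s j : received q n p Alg I h s j = rt (I j) h s.
Proof. by rewrite /received ffunE. Qed.

Lemma answers_received I h s : answers q n (received q n p Alg I h s) \subset answers q n I.
Proof.
apply/subsetP => x; rewrite !mem_answers => /forallP E; apply/forallP => j.
have := E j; rewrite received_E; apply/subsetP; exact: rt_sub.
Qed.

Definition found I x h := [exists s : 'I_p, x \in answers q n (received q n p Alg I h s)].

Lemma reported_E I h :
  reported q n p Alg I h = #|[set x in answers q n I | found I x h]|.
Proof.
rewrite /reported; apply: eq_card => x; rewrite !inE.
apply/bigcupP/andP => [[s _ xs]|[_ /existsP[s xs]]]; last by exists s.
split; last by apply/existsP; exists s.
by rewrite -mem_answers; exact: (subsetP (answers_received I h s)) x xs.
Qed.

Lemma found_up (hcov : forall i : 'I_(cq_k q), exists j, occurs q i j) I x h s :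
  x \in answers q n (received q n p Alg I h s) -> hx h x = cell s.
Proof.
rewrite mem_answers => /forallP E; apply/eqP; rewrite hx_eqE; apply/forallP => i.
have [j [c Hc]] := hcov i.
have := E j; rewrite received_E /rt; case: ifP => _; last by rewrite inE.
rewrite inE => /andP[_ /forallP /(_ c)]; rewrite ffunE.
by rewrite Hc.
Qed.

Lemma found_down I x h s : x \in answers q n I -> hx h x = cell s ->
  (forall j, (#|Tset (I j) h (hx h x)|%:R <= Lr)%R) ->
  x \in answers q n (received q n p Alg I h s).
Proof.
rewrite !mem_answers => /forallP E hs HL; apply/forallP => j.
rewrite received_E /rt -hs HL inE E /=; apply/forallP => c.
by rewrite ffunE /hx ffunE.
Qed.

Definition occP j := [pred i : 'I_(cq_k q) | [exists col, cq_var q j col == i]].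
Definition Pocc j := \prod_(i | occP j i) Pf i.

Lemma count_t_ne j (hinj : injective (cq_var q j)) (x : {ffun 'I_(cq_k q) -> 'I_n}) (c : K) (t : tup q n j) :
  (forall col, t col != x (cq_var q j col)) ->
  #|[set h : H | (hx h x == c) && [forall col, h (cq_var q j col) (t col) == c (cq_var q j col)]]|
    * (#|{: K}| * Pocc j) = #|{: H}|.
Proof.
move=> tne.
pose Z i := x i |: [set t col | col in [pred col | cq_var q j col == i]].
have := @countZ (cq_k q) n Pf Z c.
have -> : \prod_i Pf i ^ #|Z i| = #|{: K}| * Pocc j.
  rewrite card_K /Pocc [X in _ * X]big_mkcond /= -big_split /=; apply: eq_bigr => i _.
  case: ifP => [/existsP[col0 /eqP Hc0]|noc].
    have -> : Z i = [set x i; t col0].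
      apply/setP => a; rewrite !inE; congr (_ || _); apply/imsetP/eqP => [[col]|->].
        by rewrite inE => /eqP Hc ->; congr (t _); apply: hinj; rewrite Hc Hc0.
      by exists col0; rewrite // inE Hc0.
    rewrite cards2; case: eqP => [E|_]; last by rewrite /= expnS expn1.
    by have := tne col0; rewrite Hc0 E eqxx.
  have -> : Z i = [set x i].
    apply/setP => a; rewrite !inE; case: (a == x i) => //=.
    apply/negbTE/imsetP => [[col]]; rewrite inE => Hc _.
    by move: noc => /existsP; case; exists col.
  by rewrite cards1 expn1 muln1.
move=> <-; congr (_ * _); apply: eq_card => h; rewrite !inE hx_eqE.
apply/andP/forallP => [[/forallP E1 /forallP E2] i|E].
  apply/forall_inP => a; rewrite !inE => /orP[/eqP ->|/imsetP[col]]; first exact: E1.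
  by rewrite inE => /eqP <- ->; exact: E2.
split; apply/forallP.
  by move=> i; have /forall_inP := E i; apply; rewrite !inE eqxx.
move=> col; have /forall_inP := E (cq_var q j col); apply; rewrite !inE; apply/orP; right.
by apply/imsetP; exists col; rewrite // inE.
Qed.

Lemma matching_ne (I : db q n) (Im : I \in matching_dbs q n) j (t t' : tup q n j) :
  t \in I j -> t' \in I j -> t != t' -> forall col, t col != t' col.
Proof.
move=> ti t'i ne col; apply/eqP => E.
move: Im; rewrite inE => /forallP /(_ j) /andP[_ /forallP /(_ col) /forallP /(_ (t' col))].
case/cards1P => a Ha.
have : t \in [set t0 in I j | t0 col == t' col] by rewrite inE ti E eqxx.
have : t' \in [set t0 in I j | t0 col == t' col] by rewrite inE t'i eqxx.
rewrite Ha !inE => /eqP E1 /eqP E2; by rewrite E1 E2 eqxx in ne.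
Qed.

Lemma card_Ij (I : db q n) (Im : I \in matching_dbs q n) j : #|I j| = n.
Proof. by move: Im; rewrite inE => /forallP /(_ j) /andP[/eqP]. Qed.

Lemma sumT_bound (I : db q n) (Im : I \in matching_dbs q n) j (hinj : injective (cq_var q j))
  (x : {ffun 'I_(cq_k q) -> 'I_n}) (xa : x \in answers q n I) (c : K) :
  (\sum_(h : H | hx h x == c) #|Tset (I j) h c|) * (#|{: K}| * Pocc j)
    <= #|{: H}| * Pocc j + n * #|{: H}|.
Proof.
pose m (h : H) (t : tup q n j) := [forall col, h (cq_var q j col) (t col) == c (cq_var q j col)].
have E1 h : #|Tset (I j) h c| = \sum_(t in I j) (m h t : nat).
  rewrite -sum1_card [LHS]big_mkcond [RHS]big_mkcond /=; apply: eq_bigr => t _.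
  by rewrite /Tset inE /m; case: (t \in I j) => //=; case: ifP => ->.
under eq_bigr => h _ do rewrite E1.
rewrite exchange_big /=.
have E2 t : \sum_(h : H | hx h x == c) (m h t : nat) = #|[set h : H | (hx h x == c) && m h t]|.
  rewrite -sum1_card [RHS]big_mkcond [LHS]big_mkcond /=; apply: eq_bigr => h _.
  by rewrite inE; case: (hx h x == c); case: (m h t).
under eq_bigr => t _ do rewrite E2.
set xj : tup q n j := [ffun col => x (cq_var q j col)].
have xjI : xj \in I j by move: xa; rewrite mem_answers => /forallP /(_ j).
rewrite big_distrl /= (bigD1 xj) //=.
apply: leq_add.
  rewrite mulnA leq_mul2r; apply/orP; right.
  rewrite -(count_hx x c) leq_mul2r; apply/orP; right.
  by apply: subset_leq_card; apply/subsetP => h; rewrite !inE => /andP[].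
apply: (@leq_trans (\sum_(t in I j | t != xj) #|{: H}|)).
  apply: leq_sum => t /andP[tI tne]; rewrite (count_t_ne hinj) //.
  move=> col; have := matching_ne Im tI xjI tne col; by rewrite /xj ffunE.
rewrite sum_nat_const; apply: (@leq_trans (#|I j| * #|{: H}|)); last by rewrite (card_Ij Im j).
rewrite leq_mul2r; apply/orP; right.
by apply: subset_leq_card; apply/subsetP => t; rewrite unfold_in => /andP[].
Qed.

Definition Fset I x := [set h : H | found I x h].
Definition Aset (x : {ffun 'I_(cq_k q) -> 'I_n}) := [set h : H | hx h x \in CS].
Definition Bset (I : db q n) j (x : {ffun 'I_(cq_k q) -> 'I_n}) :=
  [set h : H | (hx h x \in CS) && (Lr < #|Tset (I j) h (hx h x)|%:R)%R].

Lemma F_sub_A (hcov : forall i : 'I_(cq_k q), exists j, occurs q i j) I x :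
  Fset I x \subset Aset x.
Proof.
apply/subsetP => h; rewrite !inE => /existsP[s xs].
by rewrite (found_up hcov xs); apply/imsetP; exists s.
Qed.

Lemma A_le I x (xa : x \in answers q n I) :
  #|Aset x| <= #|Fset I x| + \sum_j #|Bset I j x|.
Proof.
rewrite !cardEsum.
under [X in _ <= _ + X]eq_bigr => j _ do rewrite cardEsum.
rewrite exchange_big -big_split /=; apply: leq_sum => h _.
rewrite !inE; case/boolP: (hx h x \in CS) => //= /imsetP[s _ hs].
case/boolP: [forall j, (#|Tset (I j) h (hx h x)|%:R <= Lr)%R] => [/forallP HL|].
  have -> : found I x h by apply/existsP; exists s; apply: found_down.
  by [].
rewrite negb_forall => /existsP[j]; rewrite -Order.TotalTheory.ltNge => Hj.
have hB : h \in Bset I j x by rewrite inE Hj andbT; apply/imsetP; exists s.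
by rewrite (bigD1 j) //= hB addnCA.
Qed.

Lemma A_card (hp : p <= #|{: K}|) x : #|Aset x| * #|{: K}| = p * #|{: H}|.
Proof.
have -> : #|Aset x| = #|[set h : H | (hx h x \in CS) && true]|.
  by apply: eq_card => h; rewrite !inE andbT.
rewrite card_preim big_distrl /=.
rewrite (eq_bigr (fun _ => #|{: H}|)); last first.
  move=> c _; rewrite -(count_hx x c); congr (_ * _); apply: eq_card => h; rewrite !inE andbT.
  by [].
by rewrite sum_nat_const card_CS.
Qed.

Lemma Pocc_gt0 j : 0 < Pocc j.
Proof. by rewrite /Pocc prodn_gt0. Qed.

Lemma Bc_bound (Lr0 : (0 <= Lr)%R) (I : db q n) (Im : I \in matching_dbs q n) j
  (hinj : injective (cq_var q j)) x (xa : x \in answers q n I) (c : K)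
  (hL : ((2 * cq_l q * (Pocc j + n))%:R <= Lr * (Pocc j)%:R)%R) :
  #|[set h : H | (hx h x == c) && (Lr < #|Tset (I j) h c|%:R)%R]| * #|{: K}| * (2 * cq_l q)
    <= #|{: H}|.
Proof.
set Bc := #|_|.
set S := \sum_(h : H | hx h x == c) #|Tset (I j) h c|.
have M : (Bc%:R * Lr <= S%:R)%R := markov (fun h => hx h x == c) (fun h => #|Tset (I j) h c|) Lr0.
have SB := sumT_bound Im hinj xa c; rewrite -/S in SB.
move: SB; rewrite -(ler_nat R) => SB.
rewrite -(ler_nat R) -(@ler_pM2r _ (Pocc j + n)%:R); last by rewrite ltr0n addn_gt0 Pocc_gt0.
apply: (le_trans _ (_ : (S * (#|{: K}| * Pocc j))%:R <= _)%R); last first.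
  by apply: (le_trans SB); rewrite !natrD !natrM; lra.
have e1 : ((Bc * #|{: K}| * (2 * cq_l q))%:R * (Pocc j + n)%:R =
    Bc%:R * #|{: K}|%:R * (2 * cq_l q * (Pocc j + n))%:R :> R)%R by rewrite !natrM; ring.
rewrite e1; apply: (le_trans (_ : _ <= Bc%:R * #|{: K}|%:R * (Lr * (Pocc j)%:R))%R).
  by apply: ler_wpM2l => //; rewrite mulr_ge0 // ler0n.
have -> : (Bc%:R * #|{: K}|%:R * (Lr * (Pocc j)%:R) = (Bc%:R * Lr) * (#|{: K}| * Pocc j)%:R :> R)%R.
  by rewrite natrM; ring.
by rewrite [X in (_ <= X)%R]natrM; apply: ler_wpM2r => //; rewrite mulr_ge0 // ler0n.
Qed.

Lemma B_bound (Lr0 : (0 <= Lr)%R) (I : db q n) (Im : I \in matching_dbs q n) j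
  (hinj : injective (cq_var q j)) x (xa : x \in answers q n I)
  (hL : ((2 * cq_l q * (Pocc j + n))%:R <= Lr * (Pocc j)%:R)%R) :
  #|Bset I j x| * #|{: K}| * (2 * cq_l q) <= p * #|{: H}|.
Proof.
rewrite /Bset card_preim !big_distrl /=.
apply: (@leq_trans (\sum_(c in CS) #|{: H}|)).
  apply: leq_sum => c _.
  rewrite (eq_card (B := [set h : H | (hx h x == c) && (Lr < #|Tset (I j) h c|%:R)%R])).
    exact: Bc_bound.
  by move=> h; rewrite !inE; case: eqP => // ->.
rewrite sum_nat_const leq_mul2r; apply/orP; right.
by rewrite /CS; apply: leq_trans (leq_imset_card _ _) _; rewrite card_ord.
Qed.

Lemma F_bounds (hp : p <= #|{: K}|) (hcov : forall i : 'I_(cq_k q), exists j, occurs q i j)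
  (hinj : forall j, injective (cq_var q j)) (Lr0 : (0 <= Lr)%R)
  (hL : forall j, ((2 * cq_l q * (Pocc j + n))%:R <= Lr * (Pocc j)%:R)%R)
  (hl : 0 < cq_l q) (I : db q n) (Im : I \in matching_dbs q n) x (xa : x \in answers q n I) :
  #|Fset I x| * #|{: K}| <= p * #|{: H}| /\ p * #|{: H}| <= 2 * (#|Fset I x| * #|{: K}|).
Proof.
have AK := A_card hp x.
split.
  by rewrite -AK leq_mul2r subset_leq_card ?orbT // F_sub_A.
have AL := A_le xa.
have SB : (\sum_j #|Bset I j x|) * #|{: K}| * (2 * cq_l q) <= cq_l q * (p * #|{: H}|).
  rewrite !big_distrl /=.
  apply: (@leq_trans (\sum_(j < cq_l q) p * #|{: H}|)); last by rewrite sum_nat_const card_ord.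
  apply: leq_sum => j _; exact: B_bound.
move: AK AL SB; set A := #|Aset x|; set F := #|Fset I x|; set SBs := \sum_j _;
  set Kc := #|{: K}|; set l := cq_l q; set Y := p * _ => AK AL SB.
have : A * Kc * (2 * l) <= (F + SBs) * Kc * (2 * l) by rewrite !leq_mul2r AL !orbT.
rewrite AK !mulnDl => h2.
have : Y * (2 * l) <= F * Kc * (2 * l) + l * Y by apply: leq_trans h2 _; rewrite leq_add2l.
nia.
Qed.

Lemma sum_rep I : \sum_(h : H) reported q n p Alg I h = \sum_(x in answers q n I) #|Fset I x|.
Proof.
rewrite (eq_bigr (fun h => \sum_x (x \in [set x in answers q n I | found I x h] : nat))); last first.
  by move=> h _; rewrite reported_E cardEsum.
rewrite exchange_big /= [RHS]big_mkcond /=; apply: eq_bigr => x _.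
rewrite cardEsum; case: (boolP (x \in answers q n I)) => xa.
  by apply: eq_bigr => h _; rewrite [_ \in [set _ in answers q n I | _]]inE xa /Fset inE.
by rewrite big1 // => h _; rewrite [_ \in [set _ in answers q n I | _]]inE (negbTE xa).
Qed.

Lemma ER_bounds (hp : p <= #|{: K}|) (hcov : forall i : 'I_(cq_k q), exists j, occurs q i j)
  (hinj : forall j, injective (cq_var q j)) (Lr0 : (0 <= Lr)%R)
  (hL : forall j, ((2 * cq_l q * (Pocc j + n))%:R <= Lr * (Pocc j)%:R)%R)
  (hl : 0 < cq_l q) :
  (expected_reported R q n p Alg * #|{: K}|%:R <= p%:R * expected_output R q n)%R /\
  (p%:R * expected_output R q n <= 2 * (expected_reported R q n p Alg * #|{: K}|%:R))%R.
Proof.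
have key I (Im : I \in matching_dbs q n) :
  (\sum_(h : H) reported q n p Alg I h) * #|{: K}| <= p * #|{: H}| * #|answers q n I| /\
  p * #|{: H}| * #|answers q n I| <= 2 * ((\sum_(h : H) reported q n p Alg I h) * #|{: K}|).
  rewrite sum_rep -[#|answers q n I|]sum1_card big_distrl /= !big_distrr /=.
  split; apply: leq_sum => x xa; have [h1 h2] := F_bounds hp hcov hinj Lr0 hL hl Im xa;
    by rewrite ?muln1.
have HK : (0 < #|{: H}|)%N by apply/card_gt0P; exists h0.
rewrite /expected_reported /expected_output.
set M := matching_dbs q n.
set SR := (\sum_(I in M) \sum_w (reported q n p Alg I w)%:R)%R.
set SA := (\sum_(I in M) #|answers q n I|%:R : R)%R.
have SRn : (SR = (\sum_(I in M) \sum_(h : H) reported q n p Alg I h)%N%:R)%R.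
  by rewrite /SR natr_sum; apply: eq_bigr => I _; rewrite natr_sum.
have SAn : (SA = (\sum_(I in M) #|answers q n I|)%N%:R)%R by rewrite /SA natr_sum.
have k1 : ((\sum_(I in M) \sum_(h : H) reported q n p Alg I h) * #|{: K}|
     <= p * #|{: H}| * \sum_(I in M) #|answers q n I|)%N.
  rewrite big_distrl big_distrr /=; apply: leq_sum => I Im; by have [] := key I Im.
have k2 : (p * #|{: H}| * \sum_(I in M) #|answers q n I|
     <= 2 * ((\sum_(I in M) \sum_(h : H) reported q n p Alg I h) * #|{: K}|))%N.
  rewrite big_distrl big_distrr big_distrr /=; apply: leq_sum => I Im; by have [] := key I Im.
move: k1 k2; rewrite -!(ler_nat R) !natrM -SRn -SAn => k1 k2.
have Hr : (0 < #|{: H}|%:R :> R)%R by rewrite ltr0n.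
change #|seed q n p Alg| with #|{: H}|.
move: Hr k1 k2; set Hc := (#|{: H}|%:R : R)%R; set Mr := (#|M|%:R : R)%R; set Kc := (#|{: K}|%:R : R)%R.
move=> Hr k1 k2.
have Mr0 : (0 <= Mr)%R by rewrite ler0n.
have [M0|MN] := eqVneq Mr 0%R.
  by rewrite M0 !(mul0r, invr0, mulr0); split.
have Mp : (0 < Mr)%R by rewrite lt_def MN Mr0.
have e1 : (SR / (Mr * Hc) * Kc = (SR * Kc) / (Mr * Hc))%R by rewrite mulrAC.
have e2 : (p%:R * (SA / Mr) = (p%:R * Hc * SA) / (Mr * Hc))%R.
  by field; rewrite MN gt_eqF.
have MHp : (0 < Mr * Hc)%R by rewrite mulr_gt0.
rewrite e1 e2; split.
  by rewrite ler_pM2r ?invr_gt0.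
by rewrite mulrA ler_pM2r ?invr_gt0 // mulrA.
Qed.
End Alg.

Local Open Scope ring_scope.
Lemma powR_sum (R : realType) (a : R) (ha : (0 < a)%R) (I : finType) (P : pred I) (f : I -> R) :
  (\prod_(i | P i) a `^ f i = a `^ (\sum_(i | P i) f i))%R.
Proof.
apply: (big_ind2 (fun x y => x = a `^ y)) => //; first by rewrite powRr0.
move=> x1 x2 y1 y2 -> ->; rewrite powRD //; by rewrite (gt_eqF ha) implybT.
Qed.

Lemma sum_sub_le (R : realType) (I : finType) (P : pred I) (f : I -> R) :
  (forall i, 0 <= f i)%R -> (\sum_(i | P i) f i <= \sum_i f i)%R.
Proof.
move=> f0; rewrite [X in (_ <= X)%R](bigID P) /= lerDl; exact: sumr_ge0.
Qed.


Unset Implicit Arguments.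
Theorem proposition2 (R : realType) (q : cq) (eps tau : R) :
  cq_wf q -> cq_connected q -> is_tau_star R q tau ->
  0 <= eps -> eps < 1 - 1 / tau ->
  exists C c1 c2 : R, 0 < C /\ 0 < c1 /\ 0 < c2 /\
    forall p : nat, (0 < p)%N ->
    exists N : nat, forall n : nat, (N <= n)%N ->
    exists A : one_round_alg q n p,
      load_ok R q n p A eps C /\
      c1 * (expected_output R q n / p%:R `^ (tau * (1 - eps) - 1))
        <= expected_reported R q n p A /\
      expected_reported R q n p A
        <= c2 * (expected_output R q n / p%:R `^ (tau * (1 - eps) - 1)).
Proof.
move=> [hl [_ hinj]] [hcov _] [[v [[v0 vcov] vsum]] _] eps0 epslt.
set l := cq_l q; set k := cq_k q.
have tau1 : 1 <= tau.
  have := vcov (Ordinal hl); move/le_trans; apply; rewrite -vsum; exact: sum_sub_le.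
have tau0 : 0 < tau by apply: lt_le_trans tau1.
set a := 1 - eps.
have a1 : a <= 1 by rewrite /a lerBlDr lerDl.
have aT : 1 < a * tau.
  have h : 1 / tau < a by rewrite /a; lra.
  have : 1 / tau * tau < a * tau by rewrite ltr_pM2r.
  by rewrite mul1r mulVf ?gt_eqF.
have a0 : 0 < a.
  by move: aT; apply: contraLR; rewrite -!leNgt => ha; rewrite (le_trans (ler_wpM2r (ltW tau0) ha)) // mul0r.
exists (4 * l ^ 2)%:R, (2 ^ (k.+1))%:R^-1, 1.
split; first by rewrite ltr0n muln_gt0 expn_gt0 hl.
split; first by rewrite invr_gt0 ltr0n expn_gt0.
split; first by [].
move=> p p0; exists p => n pn.
pose P0 := fun i : 'I_k => Num.trunc (p%:R `^ (a * v i) : R).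
pose Lr := 2 * l%:R * (1 + n%:R / p%:R `^ a) : R.
exists (@Alg q n p P0 R Lr).
have pR1 : 1 <= p%:R :> R by rewrite ler1n.
have pa1 : 1 <= p%:R `^ a :> R by have := ler_powR pR1 (ltW a0); rewrite powRr0.
have pan : p%:R `^ a <= n%:R :> R by rewrite (le_trans (ler1_powR pR1 a1)) // ler_nat.
have y1 i : 1 <= p%:R `^ (a * v i) :> R.
  by have := ler_powR pR1 (mulr_ge0 (ltW a0) (v0 i)); rewrite powRr0.
have Pf_lo i : p%:R `^ (a * v i) <= (Pf P0 i)%:R :> R.
  by rewrite /Pf /P0 ltW // truncnS_gt.
have Pf_hi i : (Pf P0 i)%:R <= 2 * p%:R `^ (a * v i) :> R.
  rewrite /Pf /P0 -addn1 natrD.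
  have := truncn_le (p%:R `^ (a * v i) : R); rewrite powR_ge0 => h.
  have := y1 i; lra.
have pos_p : 0 < p%:R :> R by rewrite ltr0n.
have Pocc_lo j : p%:R `^ a <= (Pocc P0 j)%:R :> R.
  rewrite /Pocc natr_prod.
  apply: (@le_trans _ _ (\prod_(i | occP j i) p%:R `^ (a * v i))); last first.
    by apply: ler_prod => i _; rewrite Pf_lo andbT ltW // (lt_le_trans ltr01 (y1 i)).
  rewrite powR_sum //; apply: ler_powR => //.
  rewrite -mulr_sumr ler_peMr ?(ltW a0) //; exact: vcov.
have K_lo : p%:R `^ (a * tau) <= #|{: K P0}|%:R :> R.
  rewrite card_K natr_prod.
  apply: (@le_trans _ _ (\prod_i p%:R `^ (a * v i))); last first.
    by apply: ler_prod => i _; rewrite Pf_lo andbT ltW // (lt_le_trans ltr01 (y1 i)).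
  by rewrite powR_sum // -mulr_sumr vsum.
have K_hi : #|{: K P0}|%:R <= 2 ^+ k * p%:R `^ (a * tau) :> R.
  rewrite card_K natr_prod.
  apply: (@le_trans _ _ (\prod_i (2 * p%:R `^ (a * v i)))).
    by apply: ler_prod => i _; rewrite Pf_hi ler0n.
  rewrite big_split /= prodr_const card_ord powR_sum // -mulr_sumr vsum.
  by [].
have p_le_K : (p <= #|{: K P0}|)%N.
  rewrite -(ler_nat R); apply: le_trans K_lo.
  by have := ler_powR pR1 (ltW aT); rewrite powRr1 // ler0n.
have Lr0 : 0 <= Lr.
  by rewrite /Lr mulr_ge0 ?mulr_ge0 ?ler0n // addr_ge0 // divr_ge0 // powR_ge0.
have hL j : (2 * l * (Pocc P0 j + n))%:R <= Lr * (Pocc P0 j)%:R.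
  have Po := Pocc_lo j; set Po' := (Pocc P0 j)%:R in Po *.
  have pap : 0 < p%:R `^ a :> R by apply: lt_le_trans pa1.
  have h1 : n%:R <= n%:R / p%:R `^ a * Po'.
    by rewrite mulrAC ler_pdivlMr // ler_wpM2l // ler0n.
  rewrite /Lr !natrM natrD; set nn := (n%:R : R) in h1 *.
  have hl0 : 0 <= 2 * l%:R :> R by rewrite mulr_ge0 // ler0n.
  rewrite -(mulrA (2 * l%:R)); apply: ler_wpM2l => //; rewrite -/Po' mulrDl mul1r; lra.
have [E1 E2] := ER_bounds p_le_K hcov hinj Lr0 hL hl.
have pap : 0 < p%:R `^ a :> R by apply: lt_le_trans pa1.
split.
  move=> I Im w s /=.
  rewrite natr_sum; apply: (@le_trans _ _ (\sum_(j < l) Lr)).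
    apply: ler_sum => j _; rewrite /rt; case: ifP => // _; by rewrite cards0.
  rewrite sumr_const card_ord -/a.
  set r := n%:R / p%:R `^ a.
  have r1 : 1 <= r by rewrite /r ler_pdivlMr // mul1r.
  have -> : (4 * l ^ 2)%:R * n%:R / p%:R `^ a = 4 * l%:R ^+ 2 * r :> R.
    by rewrite /r natrM natrX mulrA.
  rewrite -[Lr *+ l]mulr_natl /Lr -/r.
  have h : 0 <= l%:R ^+ 2 * (r - 1) :> R by rewrite mulr_ge0 ?sqr_ge0 // subr_ge0.
  have e1 : l%:R * (2 * l%:R * (1 + r)) = 2 * l%:R ^+ 2 + 2 * (l%:R ^+ 2 * r) :> R by ring.
  have e2 : 4 * l%:R ^+ 2 * r = 4 * (l%:R ^+ 2 * r) :> R by ring.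
  have e3 : l%:R ^+ 2 * (r - 1) = l%:R ^+ 2 * r - l%:R ^+ 2 :> R by ring.
  rewrite e1 e2; rewrite e3 in h; move: h.
  set L2 := l%:R ^+ 2; set M := L2 * r; move=> h; lra.
set E := expected_output R q n.
set ER := expected_reported R q n p (Alg n p P0 Lr).
set X := p%:R `^ (a * tau).
set Kc := (#|{: K P0}|%:R : R) in E1 E2 K_lo K_hi.
have Xp : 0 < X by rewrite powR_gt0.
have E0 : 0 <= E by rewrite /E /expected_output divr_ge0 // ?sumr_ge0 // => *; rewrite ler0n.
have ER0 : 0 <= ER.
  by rewrite /ER /expected_reported divr_ge0 // ?sumr_ge0 // => *; rewrite ?sumr_ge0 // => *; rewrite ler0n.
have pd : p%:R `^ (tau * a - 1) = X / p%:R.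
  by rewrite (mulrC tau a) powRB ?(gt_eqF pos_p) ?implybT // powRr1 // ler0n.
have e : E / (X / p%:R) = p%:R * E / X by field; rewrite (gt_eqF pos_p) (gt_eqF Xp).
rewrite pd e; split.
  have h2k : (2 ^ k.+1)%:R = 2 * 2 ^+ k :> R by rewrite natrX exprS.
  have t0 : 0 < 2 * 2 ^+ k :> R by rewrite mulr_gt0 ?exprn_gt0.
  have key : p%:R * E <= ER * (2 * 2 ^+ k * X).
    apply: (le_trans E2).
    have -> : ER * (2 * 2 ^+ k * X) = 2 * (ER * (2 ^+ k * X)) by ring.
    by rewrite ler_wpM2l // ler_wpM2l.
  rewrite h2k.
  have -> : (2 * 2 ^+ k)^-1 * (p%:R * E / X) = p%:R * E / (2 * 2 ^+ k * X).
    by field; rewrite ?(gt_eqF Xp) ?(gt_eqF t0) ?expf_neq0 ?pnatr_eq0 ?andbT // ?(gt_eqF (exprn_gt0 k ltr02)).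
  by rewrite ler_pdivrMr ?mulr_gt0.
by rewrite mul1r ler_pdivlMr // (le_trans _ E1) // ler_wpM2l.
Qed.
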